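(* Let $R$ be a D-regularly nil clean ring. Then its center $C(R)$ is again a D-regularly nil clean ring.
   Context: All rings are associative with identity $1\neq 0$. $C(R)$ denotes the center of $R$, $Id(R)$ the set of idempotents, $Nil(R)$ the set of nilpotent elements. A ring $R$ is called D-regularly nil clean if for each $a\in R$ there exists an idempotent $e\in aRa\cap Id(R)$ such that $a(1-e)\in Nil(R)$. *)

(* Defs.v *)
From HB Require Import structures.
From mathcomp Require Import all_boot all_order all_algebra.
From Stdlib Require Import ClassicalEpsilon.
Set Implicit Arguments.
Unset Strict Implicit.
Unset Printing Implicit Defensive.
Import GRing.Theory.
Local Open Scope ring_scope.

Definition idempotent (R : nzRingType) (e : R) : Prop := e * e = e.

Definition nilpotent (R : nzRingType) (x : R) : Prop := exists n : nat, x ^+ n = 0.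

Definition in_aRa (R : nzRingType) (a e : R) : Prop := exists r : R, e = a * r * a.

Definition D_regularly_nil_clean (R : nzRingType) : Prop :=
  forall a : R, exists e : R,
    [/\ in_aRa a e, idempotent e & nilpotent (a * (1 - e))].

Definition central_prop (R : nzRingType) (x : R) : Prop := forall y : R, x * y = y * x.

Definition central (R : nzRingType) : {pred R} :=
  fun x => if excluded_middle_informative (central_prop x) then true else false.

Lemma centralP (R : nzRingType) (x : R) : reflect (central_prop x) (x \in @central R).
Proof.
rewrite unfold_in /central; case: excluded_middle_informative => H.
- by apply: ReflectT.
- by apply: ReflectF.
Qed.

Lemma central_subring_closed (R : nzRingType) : subring_closed (@central R).
Proof.
split.
- by apply/centralP => y; rewrite mul1r mulr1.
- move=> x y /centralP Hx /centralP Hy; apply/centralP => z.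
  by rewrite mulrBl mulrBr Hx Hy.
- move=> x y /centralP Hx /centralP Hy; apply/centralP => z.
  by rewrite -mulrA Hy mulrA Hx mulrA.
Qed.

HB.instance Definition _ (R : nzRingType) :=
  GRing.isSubringClosed.Build R (@central R) (central_subring_closed R).

Record center (R : nzRingType) := Center { center_val :> R; _ : center_val \in @central R }.

HB.instance Definition _ (R : nzRingType) := [isSub for @center_val R].
HB.instance Definition _ (R : nzRingType) := [Choice of center R by <:].
HB.instance Definition _ (R : nzRingType) := [SubChoice_isSubNzRing of center R by <:].

(* Main.v *)
Require Import Defs.
From mathcomp Require Import all_boot all_order all_algebra.
Import GRing.Theory.
Local Open Scope ring_scope.

Lemma cent_e (R : nzRingType) (b e t : R) :
  central_prop b -> b = b * e -> e = b * t -> e * e = e -> central_prop e.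
Proof.
move=> cb bbe ebt ee y.
have eb : b = e * b by rewrite -cb.
have h1 : e * y = e * y * e.
  transitivity (b * (t * y)); first by rewrite ebt mulrA.
  rewrite cb {1}bbe mulrA.
  transitivity (b * (t * y) * e); first by rewrite cb.
  by rewrite mulrA -ebt.
have h2 : y * e = e * y * e.
  transitivity ((b * y) * t); first by rewrite cb {1}ebt mulrA.
  by rewrite {1}eb -!mulrA (mulrA b) cb -mulrA -ebt.
by rewrite h1 h2.
Qed.

Lemma key (R : nzRingType) (a e r : R) n :
  central_prop a -> e = a * r * a -> e * e = e -> (a * (1 - e)) ^+ n = 0 ->
  central_prop e /\ central_prop (e * r * e) /\ e = a * (e * r * e) * a.
Proof.
move=> ca ear ee hn.
have pe : forall k, (1 - e) ^+ k.+1 = 1 - e.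
  elim=> [|k IH]; first by rewrite expr1.
  by rewrite exprS IH mulrBl mul1r mulrBr mulr1 ee subrr subr0.
have pe2 : forall k, e ^+ k.+1 = e.
  elim=> [|k IH]; first by rewrite expr1.
  by rewrite exprS IH ee.
have e2 : e = a ^+ 2 * r.
  by rewrite ear -mulrA -[r * a]ca mulrA expr2.
have cx : forall k, central_prop (a ^+ k).
  move=> k y; elim: k => [|k IH]; first by rewrite expr0 mul1r mulr1.
  by rewrite exprS -mulrA IH mulrA ca -mulrA.
case: n hn => [|m] hn.
  by move: hn; rewrite expr0 => /eqP; rewrite oner_eq0.
have ce : central_prop e.
  apply: (@cent_e _ (a ^+ m.+1) e (a ^+ m.+1 * r ^+ m.+1)).
  - exact: cx.
  - move: hn; rewrite exprMn_comm; last by rewrite /GRing.comm ca.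
    by rewrite pe mulrBr mulr1 => /eqP; rewrite subr_eq0 => /eqP.
  - have -> : e = e ^+ m.+1 by rewrite pe2.
    rewrite {1}e2 exprMn_comm; last by rewrite /GRing.comm cx.
    by rewrite -exprM mulnC exprM expr2 mulrA.
  - exact: ee.
have eq1 : e = a * (e * r * e) * a.
  transitivity (e * (a * r * a) * e); first by rewrite -ear !ee.
  have h : a * r * a = r * (a * a).
  by rewrite (ca r) -mulrA.
  have aa : central_prop (a * a) by rewrite -expr2; exact: cx.
  rewrite h mulrA -mulrA aa mulrA.
  by rewrite ca -mulrA !mulrA.
split=> //; split=> //.
set s := e * r * e.
have es : e * s = s by rewrite /s !mulrA ee.
have se : s * e = s by rewrite /s -mulrA ee.
have a2s : a ^+ 2 * s = e by rewrite eq1 -mulrA -ca mulrA expr2.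
have sa2 : s * a ^+ 2 = e by rewrite -cx.
move=> y.
transitivity (s * y * e); first by rewrite -{1}se -mulrA ce mulrA.
rewrite -a2s mulrA -(mulrA s y) -cx mulrA sa2 ce -mulrA es //.
Qed.

Theorem proposition2p2 (R : nzRingType) :
  D_regularly_nil_clean R -> D_regularly_nil_clean (center R).
Proof.
move=> H a.
have ca : central_prop (val a) by apply/centralP; exact: valP.
have [e [[r er] ee [n hn]]] := H (val a).
have [ce [cs eq1]] := @key _ _ _ _ _ ca er ee hn.
pose ec : center R := Sub e (introT (centralP e) ce).
pose sc : center R := Sub (e * r * e) (introT (centralP _) cs).
exists ec; split.
- exists sc; apply: val_inj; rewrite !rmorphM /=. exact: eq1.
- by apply: val_inj; rewrite rmorphM /=.
- exists n; apply: val_inj; rewrite rmorphXn rmorphM rmorphB rmorph1 rmorph0 /=. exact: hn.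
Qed.
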